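(* Let $X$ be a Fréchet space and let $\Gamma:[0,1]\to ck(X)$ be Bochner measurable. Then there is a set $N\subseteq[0,1]$ with $\mu(N)=0$ such that $\bigcup_{t\in[0,1]\setminus N}\Gamma(t)$ is a separable subset of $X$.
   Context: $X$ is a Fréchet space with topology generated by an increasing sufficient sequence of seminorms $(p_i)$ and translation-invariant metric $d(x,y)=\sum_{i\ge1}2^{-i}\frac{p_i(x-y)}{1+p_i(x-y)}$. $cb(X)$ (resp. $ck(X)$) is the family of nonempty closed bounded convex (resp. compact convex) subsets of $X$; $H$ is the Hausdorff metric on $cb(X)$ induced by $d$. $\mu$ is Lebesgue measure on $[0,1]$. A simple multifunction is $\sum_{j=1}^p\chi_{A_j}C_j$ with $A_j$ pairwise disjoint Lebesgue measurable sets and $C_j\in cb(X)$. $\Gamma$ is Bochner measurable if there are simple multifunctions $\Gamma_n$ with $H(\Gamma_n(t),\Gamma(t))\to0$ for a.e. $t\in[0,1]$. *)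

(* Defs.v *)
From HB Require Import structures.
From mathcomp Require Import all_boot all_order all_algebra.
From mathcomp Require Import all_classical all_reals all_analysis.
Set Implicit Arguments. Unset Strict Implicit. Unset Printing Implicit Defensive.
Import Order.TTheory GRing.Theory Num.Theory.
Import numFieldNormedType.Exports.
Local Open Scope classical_set_scope.
Local Open Scope ring_scope.

Section Frechet.
Variables (R : realType) (X : lmodType R).

Definition seminorm (q : X -> R) : Prop :=
  (forall x y, q (x + y) <= q x + q y) /\ (forall (a : R) x, q (a *: x) = `|a| * q x).

(** translation-invariant metric induced by the sequence of seminorms
    (index i : nat here corresponds to index i+1 in the paper) *)
Definition fdist (p : nat -> X -> R) (x y : X) : R :=
  limn (@series R (fun i : nat => (2 ^- i.+1) * (p i (x - y) / (1 + p i (x - y))))).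

Definition dCauchy (p : nat -> X -> R) (u : nat -> X) : Prop :=
  forall e : R, 0 < e -> exists N : nat, forall m n : nat,
    (N <= m)%N -> (N <= n)%N -> fdist p (u m) (u n) < e.

Definition dconverges (p : nat -> X -> R) (u : nat -> X) (x : X) : Prop :=
  forall e : R, 0 < e -> exists N : nat, forall n : nat, (N <= n)%N -> fdist p (u n) x < e.

Definition frechet (p : nat -> X -> R) : Prop :=
  [/\ forall i, seminorm (p i),
      forall i x, p i x <= p i.+1 x,
      forall x, (forall i, p i x = 0) -> x = 0
    & forall u, dCauchy p u -> exists x, dconverges p u x].

(** topological notions (for the metric d, which induces the Fréchet topology) *)
Definition dopen (p : nat -> X -> R) (U : set X) : Prop :=
  forall x, U x -> exists2 e : R, 0 < e & forall y, fdist p x y < e -> U y.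

Definition dclosed (p : nat -> X -> R) (C : set X) : Prop :=
  forall x, (forall e : R, 0 < e -> exists2 y, C y & fdist p x y < e) -> C x.

Definition dcompact (p : nat -> X -> R) (K : set X) : Prop :=
  forall (I : Type) (U : I -> set X), (forall i, dopen p (U i)) ->
    K `<=` \bigcup_(i in [set: I]) U i ->
    exists2 F : set I, finite_set F & K `<=` \bigcup_(i in F) U i.

Definition fbounded (p : nat -> X -> R) (C : set X) : Prop :=
  forall i, exists M : R, forall x, C x -> p i x <= M.

Definition convex_set (C : set X) : Prop :=
  forall x y (l : R), C x -> C y -> 0 <= l -> l <= 1 -> C (l *: x + (1 - l) *: y).

Definition cb (p : nat -> X -> R) (C : set X) : Prop :=
  [/\ C !=set0, dclosed p C, fbounded p C & convex_set C].

Definition ck (p : nat -> X -> R) (C : set X) : Prop :=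
  [/\ C !=set0, dcompact p C & convex_set C].

Definition hexcess (p : nat -> X -> R) (A B : set X) : R :=
  sup [set inf [set fdist p a b | b in B] | a in A].

Definition hausdorff (p : nat -> X -> R) (A B : set X) : R :=
  Num.max (hexcess p A B) (hexcess p B A).

Definition set_add (A B : set X) : set X := [set a + b | a in A & b in B].
Definition set_scale (a : R) (A : set X) : set X := [set a *: x | x in A].

(** Lebesgue measurable subsets of R (Carathéodory-measurable for the
    Lebesgue outer measure, i.e. the completed Lebesgue sigma-algebra) *)
Definition leb_measurable (A : set R) : Prop :=
  ((wlength (@idfun R))^*)%mu.-cara.-measurable A.

(** simple multifunction  t |-> \sum_j chi_{A_j}(t) C_j *)
Definition simple_multifunction (p : nat -> X -> R) (G : R -> set X) : Prop :=
  exists s : seq (set R * set X),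
    [/\ forall j, (j < size s)%N -> leb_measurable (nth (set0, set0) s j).1 /\
                  (nth (set0, set0) s j).1 `<=` `[0, 1]%classic,
        forall j k, (j < size s)%N -> (k < size s)%N -> j <> k ->
          (nth (set0, set0) s j).1 `&` (nth (set0, set0) s k).1 = set0,
        forall j, (j < size s)%N -> cb p (nth (set0, set0) s j).2
      & G = fun t => foldr (fun AC S => set_add (set_scale (\1_(AC.1) t) AC.2) S)
                           [set 0] s].

Definition bochner_measurable (p : nat -> X -> R) (Gam : R -> set X) : Prop :=
  exists Gn : nat -> R -> set X,
    (forall n, simple_multifunction p (Gn n)) /\
    exists N : set R, (@lebesgue_measure R).-negligible N /\
      forall t, `[0, 1]%classic t -> ~ N t ->
        (fun n => hausdorff p (Gn n t) (Gam t)) @ \oo --> (0 : R).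

Definition dseparable (p : nat -> X -> R) (S : set X) : Prop :=
  exists D : set X, [/\ countable D, D `<=` S &
    forall x, S x -> forall e : R, 0 < e -> exists2 y, D y & fdist p x y < e].

End Frechet.

(* Main.v *)
Require Import Defs.
From HB Require Import structures.
From mathcomp Require Import all_boot all_order all_algebra.
From mathcomp Require Import all_classical all_reals all_analysis.
From mathcomp Require Import ring lra.
Import Order.TTheory GRing.Theory Num.Theory.
Import numFieldNormedType.Exports.
Local Open Scope classical_set_scope.
Local Open Scope ring_scope.

Section M.
Variables (R : realType) (X : lmodType R) (p : nat -> X -> R).
Hypothesis sn : forall i, seminorm (p i).

Lemma sn0 i : p i 0 = 0.
Proof. by have := (sn i).2 0 0; rewrite scale0r normr0 mul0r. Qed.

Lemma snN i x : p i (- x) = p i x.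
Proof. by have := (sn i).2 (-1) x; rewrite scaleN1r normrN normr1 mul1r. Qed.

Lemma sn_ge0 i x : 0 <= p i x.
Proof.
have := (sn i).1 x (- x); rewrite subrr sn0 snN => h.
by rewrite -(@pmulr_rge0 _ 2) // mulr2n mulrDl !mul1r.
Qed.

Lemma geom_sum n : \sum_(0 <= k < n) (2 ^- k.+1 : R) = 1 - 2 ^- n.
Proof.
elim: n => [|n IH]; first by rewrite big_nil expr0 invr1 subrr.
rewrite big_nat_recr //= IH exprS invfM.
have h : (0 : R) < 2 ^- n by rewrite invr_gt0 exprn_gt0.
lra.
Qed.

Lemma bounded_series (u : nat -> R) :
  (forall k, 0 <= u k <= 2 ^- k.+1) ->
  [/\ cvgn (series u), 0 <= limn (series u) & limn (series u) <= 1].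
Proof.
move=> hu.
have nd : nondecreasing_seq (series u).
  by rewrite seriesEnat; apply: nondecreasing_series => n _ _; case/andP: (hu n).
have ub : forall n, series u n <= 1.
  move=> n; rewrite seriesEnat /= (le_trans (ler_sum _ (fun k _ => (andP (hu k)).2))) //.
  rewrite geom_sum lerBlDr lerDl invr_ge0 exprn_ge0 //.
have cv : cvgn (series u).
  apply: nondecreasing_is_cvgn => //; exists 1 => _ [n _ <-]; exact: ub.
split => //.
  apply: limr_ge => //; near=> n; rewrite seriesEnat /=; apply: sumr_ge0 => k _.
  by case/andP: (hu k).
apply: limr_le => //; near=> n; exact: ub.
Unshelve. all: by end_near.
Qed.

Definition term x y := fun i : nat => (2 ^- i.+1) * (p i (x - y) / (1 + p i (x - y))).

Lemma phi_bnd (q : R) : 0 <= q -> 0 <= q / (1 + q) <= 1.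
Proof.
move=> q0; apply/andP; split; first by rewrite divr_ge0 // addr_ge0.
by rewrite ler_pdivrMr ?mul1r ?lerDr //; lra.
Qed.

Lemma term_bnd x y k : 0 <= term x y k <= 2 ^- k.+1.
Proof.
have /andP[h1 h2] := @phi_bnd _ (sn_ge0 k (x - y)).
have h : (0:R) < 2 ^- k.+1 by rewrite invr_gt0 exprn_gt0.
rewrite /term; apply/andP; split; first by rewrite mulr_ge0 // ltW.
by rewrite ler_piMr // ltW.
Qed.

Lemma fd_props x y : [/\ cvgn (series (term x y)), 0 <= fdist p x y & fdist p x y <= 1].
Proof. exact: bounded_series (term_bnd x y). Qed.

Lemma fd_ge0 x y : 0 <= fdist p x y. Proof. by case: (fd_props x y). Qed.
Lemma fd_le1 x y : fdist p x y <= 1. Proof. by case: (fd_props x y). Qed.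

Lemma fd_sym x y : fdist p x y = fdist p y x.
Proof. by rewrite /fdist; congr (limn (series _)); apply/funext => i; rewrite -opprB snN. Qed.

Lemma fd_xx x : fdist p x x = 0.
Proof.
rewrite /fdist (_ : (fun i => _) = fun _ => 0).
  rewrite (_ : series _ = fun _ => 0); first by rewrite lim_cst.
  by apply/funext => n; rewrite seriesEnat /= big1.
by apply/funext => i; rewrite subrr sn0 mul0r mulr0.
Qed.

Lemma divle (x y u v : R) : 0 < u -> 0 < v -> x * v <= y * u -> x / u <= y / v.
Proof. by move=> u0 v0; rewrite ler_pdivrMr // mulrAC ler_pdivlMr. Qed.

Lemma phi_sub (a b c : R) : 0 <= a -> 0 <= b -> 0 <= c -> c <= a + b ->
  c / (1 + c) <= a / (1 + a) + b / (1 + b).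
Proof.
move=> a0 b0 c0 cab.
apply: (@le_trans _ _ ((a + b) / (1 + (a + b)))).
  by apply: divle; [lra|lra|nra].
rewrite mulrDl; apply: lerD; apply: divle; (lra || nra).
Qed.

Lemma fdE x y : fdist p x y = limn (series (term x y)).
Proof. by []. Qed.

Lemma fd_tri x y z : fdist p x z <= fdist p x y + fdist p y z.
Proof.
have [c1 _ _] := fd_props x y; have [c2 _ _] := fd_props y z.
have [c3 _ _] := fd_props x z.
rewrite !fdE -lim_seriesD //; apply: lim_series_le => //.
  exact: is_cvg_seriesD.
move=> k; rewrite /term /= -mulrDr; apply: ler_wpM2l.
  by rewrite invr_ge0 exprn_ge0.
apply: phi_sub; rewrite ?sn_ge0 //.
by rewrite (_ : x - z = (x - y) + (y - z)) ?(sn k).1 // addrA subrK.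
Qed.

Lemma hex A B r a : B !=set0 -> A a -> hexcess p A B < r ->
  exists2 b, B b & fdist p a b < r.
Proof.
move=> [b0 Bb0] Aa; rewrite /hexcess => hr.
set T := [set inf _ | a in A] in hr.
have infle : forall a', inf [set fdist p a' b | b in B] <= 1.
  move=> a'; apply: (@le_trans _ _ (fdist p a' b0)); last exact: fd_le1.
  apply: ge_inf; last by exists b0.
  by exists 0 => _ [b _ <-]; exact: fd_ge0.
have hT : has_ubound T by exists 1 => _ [a' _ <-]; exact: infle.
have : inf [set fdist p a b | b in B] < r.
  apply: le_lt_trans hr; apply: ub_le_sup => //; by exists a.
move/inf_lt => /(_ (ex_intro _ (fdist p a b0) (ex_intro2 _ _ b0 Bb0 erefl))).
by case=> _ [b Bb <-] h; exists b.
Qed.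

Lemma haus_l A B r a : B !=set0 -> A a -> hausdorff p A B < r ->
  exists2 b, B b & fdist p a b < r.
Proof. by move=> B0 Aa; rewrite /hausdorff gt_max => /andP[h _]; exact: hex h. Qed.

Lemma haus_r A B r b : A !=set0 -> B b -> hausdorff p A B < r ->
  exists2 a, A a & fdist p b a < r.
Proof. by move=> A0 Bb; rewrite /hausdorff gt_max => /andP[_ h]; exact: hex h. Qed.

Lemma small (e : R) : 0 < e -> exists m : nat, (m.+1%:R : R)^-1 < e.
Proof.
move=> e0; exists (Num.truncn e^-1).
rewrite -[X in _ < X]invrK ltf_pV2 ?truncnS_gt // posrE ?invr_gt0 //.
Qed.

Lemma ball_open x (r : R) (P : Prop) : dopen p [set y | P /\ fdist p x y < r].
Proof.
move=> y [hP hy]; exists (r - fdist p x y); first by rewrite subr_gt0.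
move=> z hz; split => //.
have := fd_tri x y z; lra.
Qed.

Lemma compact_sep K : dcompact p K -> dseparable p K.
Proof.
move=> cK.
have hF : forall m : nat, exists F : set X, finite_set F /\ (K `<=` \bigcup_(x in F) [set y | K x /\ fdist p x y < (m.+1%:R)^-1]).
  move=> m.
  have h1 : forall x, dopen p [set y | K x /\ fdist p x y < (m.+1%:R)^-1].
    by move=> x; exact: ball_open.
  have h2 : K `<=` \bigcup_(x in [set: X]) [set y | K x /\ fdist p x y < (m.+1%:R)^-1].
    move=> y Ky; exists y => //; split => //; rewrite fd_xx invr_gt0 ltr0n //.
  have [F fF cov] := cK X _ h1 h2.
  by exists F.
have [F hF'] := choice hF.
exists (\bigcup_(m in [set: nat]) (F m `&` K)); split.
- apply: bigcup_countable; first exact: countableP.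
  by move=> m _; apply: finite_set_countable; apply: finite_setIl; case: (hF' m).
- by move=> y [m _ []].
- move=> x Kx e e0; have [m hm] := @small _ e0.
  have [_ cov] := hF' m; have [y Fy [Ky hy]] := cov x Kx.
  exists y; first by exists m.
  by rewrite fd_sym; apply: lt_trans hm.
Qed.

Lemma simple_bits G : simple_multifunction p G ->
  exists bits : R -> seq bool, (forall t t', bits t = bits t' -> G t = G t') /\
    (forall t, G t !=set0).
Proof.
case=> s [_ _ hcb ->].
exists (fun t => [seq (t \in AC.1) | AC <- s]); split.
  move=> t t'; elim: s {hcb} => [//|AC s IH] /= [h1 /IH ->].
  by rewrite !indicE h1.
move=> t; elim: s hcb => [|AC s IH] hcb /=; first by exists 0.
have [c Cc] : AC.2 !=set0 by case: (hcb 0%N isT).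
have [y Sy] : foldr (fun AC S => set_add (set_scale (\1_(AC.1) t) AC.2) S) [set 0] s !=set0.
  by apply: IH => j hj; exact: (hcb j.+1 hj).
exists (\1_(AC.1) t *: c + y); exists (\1_(AC.1) t *: c); first by exists c.
by exists y.
Qed.

End M.

Theorem theorem3p6 (R : realType) (X : lmodType R) (p : nat -> X -> R)
  (Gam : R -> set X) :
  frechet p ->
  (forall t, `[0, 1]%classic t -> ck p (Gam t)) ->
  bochner_measurable p Gam ->
  exists N : set R, (@lebesgue_measure R).-negligible N /\
    dseparable p (\bigcup_(t in `[0, 1]%classic `\` N) Gam t).
Proof.
case=> sn _ _ _ hck [Gn [hGn [N [hN hconv]]]].
exists N; split => //.
have hb : forall n, exists bits : R -> seq bool,
    (forall t t', bits t = bits t' -> Gn n t = Gn n t') /\ (forall t, Gn n t !=set0).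
  by move=> n; exact: (@simple_bits _ _ _ _ (hGn n)).
have [bits hbits] := choice hb.
pose good t := `[0, 1]%classic t /\ ~ N t.
pose P (i : nat * nat * seq bool) t := [/\ good t, bits i.1.1 t = i.2 &
    hausdorff p (Gn i.1.1 t) (Gam t) < (i.1.2.+1%:R)^-1].
have /choice [T hT] : forall i, exists t', (exists t, P i t) -> P i t'.
  move=> i.
  case: (pselect (exists t, P i t)) => [[t Pt]|nP]; first by exists t.
  by exists 0 => /nP.
have /choice [Dt hDt] : forall t, exists D : set X, good t -> [/\ countable D, D `<=` Gam t &
      forall x, Gam t x -> forall e : R, 0 < e -> exists2 y, D y & fdist p x y < e].
  move=> t.
  case: (pselect (good t)) => [gt|ng]; last by exists set0 => /ng.
  have [_ cK _] := hck t gt.1.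
  have [D [cD sD dD]] := @compact_sep _ _ _ sn _ cK.
  by exists D.
exists (\bigcup_(i in [set i | exists t, P i t]) Dt (T i)); split.
- apply: bigcup_countable; first exact: countableP.
  by move=> i /hT [g _ _]; case: (hDt _ g).
- move=> y [i /hT [g _ _] Dy]; exists (T i) => //.
  by case: (hDt _ g) => _ sD _; exact: sD.
move=> x [t gt Gx] e e0.
have r0 : 0 < e / 3 by rewrite divr_gt0.
have [m hm] := @small _ _ r0.
have m0 : (0:R) < (m.+1%:R)^-1 by rewrite invr_gt0 ltr0n.
have [n hn] : exists n, hausdorff p (Gn n t) (Gam t) < (m.+1%:R)^-1.
  move: (hconv t gt.1 gt.2) => /cvgr_dist_lt /(_ _ m0).
  case=> K _ HK; exists K; have := HK K (leqnn K).
  by rewrite sub0r normrN => /(le_lt_trans (ler_norm _)).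
set i := (n, m, bits n t).
have Pit : P i t by split.
have [g' hb' hh'] := hT i (ex_intro _ t Pit).
have [a Sa dxa] := @haus_r _ _ _ sn _ _ _ _ ((hbits n).2 t) Gx hn.
have Sa' : Gn n (T i) a by rewrite ((hbits n).1 (T i) t hb').
have [ck1 _ _] := hck (T i) g'.1.
have [b Gb dab] := @haus_l _ _ _ sn _ _ _ _ ck1 Sa' hh'.
have [_ _ dD] := hDt _ g'.
have [w Dw dbw] := dD b Gb (e / 3) r0.
exists w; first by exists i => //; exists (T i).
have t1 := @fd_tri _ _ _ sn x a b; have t2 := @fd_tri _ _ _ sn x b w.
have dab' : fdist p a b < (m.+1%:R)^-1 := dab.
move: t1 t2 dxa dab' dbw hm.
move: (fdist p x b) (fdist p x w) (fdist p x a) (fdist p a b) (fdist p b w) ((m.+1%:R : R)^-1).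
move=> A B C D E F; lra.
Qed.
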